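(* Let $L\ge 2$, $k\ge 2$ be integers, $\kappa:\{1,\dots,k-1\}\times\mathbb{N}\to\{0,\dots,L-1\}$ a map, and let $(b(n))_{n=0}^\infty$ be the $(L,k,\kappa)$-TM sequence over the letters $a_j=\exp\frac{2\pi\sqrt{-1}\,j}{L}$, $0\le j\le L-1$. Let $G(z)=\sum_{n=0}^\infty b(n)z^n$. Then for $|z|<1$, $$G(z)=\prod_{y=0}^{\infty}\Big(1+\sum_{s=1}^{k-1}\exp\frac{2\pi\sqrt{-1}\,\kappa(s,y)}{L}\,z^{sk^y}\Big).$$
   Context: $\mathbb{N}$ is the set of non-negative integers. Given pairwise distinct complex numbers $a_0,\dots,a_{L-1}$, let $f$ be the map on $\{a_0,\dots,a_{L-1}\}$ with $f(a_i)=a_{i+1}$ (indices modulo $L$), extended letterwise to finite words; $f^j$ is its $j$-fold iterate and $f^0$ the identity. Define finite words $A_0=a_0$ and $A_{n+1}=A_n\,f^{\kappa(1,n)}(A_n)\,f^{\kappa(2,n)}(A_n)\cdots f^{\kappa(k-1,n)}(A_n)$ (concatenation), so $A_n$ has length $k^n$ and is a prefix of $A_{n+1}$. The infinite word $A_\infty=\lim_{n\to\infty}A_n$, viewed as a sequence indexed from $0$, is the $(L,k,\kappa)$-TM sequence. *)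

(* Defs.v *)
From Stdlib Require Import Reals List.
From Coquelicot Require Import Coquelicot.
Open Scope R_scope.

Definition root_letter (L j : nat) : C :=
  (cos (2 * PI * INR j / INR L), sin (2 * PI * INR j / INR L)).

(* extended shift exponent: kappa(0, n) = 0 (the first block A_n is unshifted) *)
Definition kap0 (kappa : nat -> nat -> nat) (s n : nat) : nat :=
  match s with O => O | _ => kappa s n end.

(* A_n encoded by the indices j of the letters a_j; f^t(a_j) = a_{(j+t) mod L}. *)
Fixpoint TM_word (L k : nat) (kappa : nat -> nat -> nat) (n : nat) : list nat :=
  match n with
  | O => 0%nat :: nil
  | S n' =>
      let A := TM_word L k kappa n' in
      flat_map (fun s => map (fun j => ((j + kap0 kappa s n') mod L)%nat) A)
               (seq 0 k)
  end.

(* The (L,k,kappa)-TM sequence over a_0..a_{L-1}: b(m) is the m-th letter of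
   A_{m+1}, which has length k^(m+1) > m and is a prefix of A_infinity. *)
Definition TM_seq (L k : nat) (kappa : nat -> nat -> nat) (m : nat) : C :=
  root_letter L (nth m (TM_word L k kappa (S m)) 0%nat).

Definition TM_factor (L k : nat) (kappa : nat -> nat -> nat) (z : C) (y : nat) : C :=
  Cplus 1 (fold_right Cplus 0
    (map (fun s => Cmult (root_letter L (kappa s y)) (Cpow z (s * k ^ y)))
         (seq 1 (k - 1)))).

Fixpoint TM_partial_prod (L k : nat) (kappa : nat -> nat -> nat) (z : C) (N : nat) : C :=
  match N with
  | O => 1
  | S N' => Cmult (TM_partial_prod L k kappa z N') (TM_factor L k kappa z N')
  end.

(* Main.v *)
Require Import Defs.
From Stdlib Require Import Reals List Lia Lra.
From Coquelicot Require Import Coquelicot.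
Open Scope R_scope.

Lemma rl_add (L a b : nat) : (0 < L)%nat ->
  root_letter L ((a + b) mod L) = Cmult (root_letter L a) (root_letter L b).
Proof.
  intros HL. unfold root_letter.
  set (q := ((a + b) / L)%nat). set (r := ((a+b) mod L)%nat).
  assert (Hd : (a + b = L * q + r)%nat) by (apply Nat.div_mod_eq).
  assert (HLr : INR L <> 0) by (apply not_0_INR; lia).
  assert (Harg : 2 * PI * INR a / INR L + 2 * PI * INR b / INR L
     = 2 * PI * INR r / INR L + 2 * INR q * PI).
  { assert (INR a + INR b = INR L * INR q + INR r).
    { rewrite <- plus_INR, <- mult_INR, <- plus_INR. f_equal. exact Hd. }
    field_simplify_eq; [|exact HLr]. nra. }
  unfold Cmult; simpl.
  rewrite <- (cos_period (2 * PI * INR r / INR L) q), <- (sin_period (2 * PI * INR r / INR L) q).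
  rewrite <- Harg, cos_plus, sin_plus. f_equal; ring.
Qed.

Lemma rl0 (L : nat) : root_letter L 0 = 1.
Proof.
  unfold root_letter. simpl INR. replace (2 * PI * 0 / INR L) with 0 by (unfold Rdiv; ring).
  rewrite cos_0, sin_0. reflexivity.
Qed.

Lemma rl_mod (L : nat) j : Cmod (root_letter L j) = 1.
Proof.
  unfold root_letter, Cmod. simpl. rewrite !Rmult_1_r.
  pose proof (sin2_cos2 (2 * PI * INR j / INR L)) as H. unfold Rsqr in H.
  rewrite Rplus_comm, H. apply sqrt_1.
Qed.

Fixpoint ev (e : nat -> C) (z : C) (l : list nat) : C :=
  match l with nil => 0 | j :: t => Cplus (e j) (Cmult z (ev e z t)) end.

Lemma ev_app e z l1 l2 : ev e z (l1 ++ l2) = Cplus (ev e z l1) (Cmult (Cpow z (length l1)) (ev e z l2)).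
Proof. induction l1; simpl. ring. rewrite IHl1. ring. Qed.

Lemma ev_shift L z t l : (0 < L)%nat ->
  ev (root_letter L) z (map (fun j => ((j + t) mod L)%nat) l) = Cmult (root_letter L t) (ev (root_letter L) z l).
Proof. intros HL. induction l; simpl. ring. rewrite IHl, rl_add by exact HL. ring. Qed.

Lemma block L z (A : list nat) (g : nat -> nat) : (0 < L)%nat -> forall m a,
  Cmult (ev (root_letter L) z (flat_map (fun s => map (fun j => ((j + g s) mod L)%nat) A) (seq a m)))
        (Cpow z (a * length A))
  = Cmult (fold_right Cplus 0 (map (fun s => Cmult (root_letter L (g s)) (Cpow z (s * length A))) (seq a m)))
          (ev (root_letter L) z A).
Proof.
  intros HL m. induction m; intros a; simpl. ring.
  rewrite ev_app, length_map, ev_shift by exact HL.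
  specialize (IHm (S a)). simpl in IHm. rewrite Cpow_add_r in IHm.
  set (R0 := ev _ _ _) in *. set (F0 := fold_right _ _ _) in *.
  transitivity (Cplus (Cmult (root_letter L (g a)) (Cmult (ev (root_letter L) z A) (Cpow z (a * length A))))
     (Cmult R0 (Cmult (Cpow z (length A)) (Cpow z (a * length A))))). ring.
  rewrite IHm. ring.
Qed.

Lemma len_flat (A : list nat) (f : nat -> nat -> nat) m a :
  length (flat_map (fun s => map (f s) A) (seq a m)) = (m * length A)%nat.
Proof. revert a; induction m; intros a; simpl. reflexivity. rewrite length_app, length_map, IHm. lia. Qed.

Lemma TM_len L k kappa N : length (TM_word L k kappa N) = (k ^ N)%nat.
Proof. induction N; simpl. reflexivity. rewrite len_flat, IHN. lia. Qed.

Lemma TM_lt L k kappa N : (0 < L)%nat -> List.Forall (fun j => (j < L)%nat) (TM_word L k kappa N).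
Proof.
  intros HL. destruct N; simpl. constructor; [lia|constructor].
  apply Forall_forall. intros x Hx. apply in_flat_map in Hx. destruct Hx as [s [_ Hx]].
  apply in_map_iff in Hx. destruct Hx as [j [<- _]]. apply Nat.mod_upper_bound; lia.
Qed.

Lemma TM_prefix L k kappa N : (0 < L)%nat -> (1 <= k)%nat ->
  exists r, TM_word L k kappa (S N) = TM_word L k kappa N ++ r.
Proof.
  intros HL Hk. simpl. destruct k as [|k']; [lia|]. simpl seq. simpl flat_map.
  eexists. f_equal.
  rewrite <- (map_id (TM_word L (S k') kappa N)) at 2.
  apply map_ext_in. intros j Hj. rewrite Nat.add_0_r. apply Nat.mod_small.
  pose proof (TM_lt L (S k') kappa N HL) as H. rewrite Forall_forall in H. auto.
Qed.

Lemma TM_nth_step L k kappa N i : (0 < L)%nat -> (1 <= k)%nat -> (i < k ^ N)%nat ->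
  nth i (TM_word L k kappa (S N)) 0%nat = nth i (TM_word L k kappa N) 0%nat.
Proof.
  intros HL Hk Hi. destruct (TM_prefix L k kappa N HL Hk) as [r ->].
  apply app_nth1. rewrite TM_len. exact Hi.
Qed.

Lemma TM_nth_stable L k kappa N M i : (0 < L)%nat -> (1 <= k)%nat -> (N <= M)%nat -> (i < k ^ N)%nat ->
  nth i (TM_word L k kappa M) 0%nat = nth i (TM_word L k kappa N) 0%nat.
Proof.
  intros HL Hk HNM Hi. induction HNM. reflexivity.
  rewrite TM_nth_step; auto. eapply Nat.lt_le_trans; [exact Hi|]. apply Nat.pow_le_mono_r; lia.
Qed.

Lemma prod_ev L k kappa z N : (0 < L)%nat -> (1 <= k)%nat ->
  TM_partial_prod L k kappa z N = ev (root_letter L) z (TM_word L k kappa N).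
Proof.
  intros HL Hk. induction N.
  - simpl. rewrite rl0. ring.
  - simpl TM_partial_prod. rewrite IHN.
    pose proof (block L z (TM_word L k kappa N) (fun s => kap0 kappa s N) HL k 0) as B.
    simpl Cpow in B. rewrite Cmult_1_r in B. simpl TM_word. rewrite B. clear B.
    rewrite TM_len. destruct k as [|k']; [lia|]. simpl seq. simpl map. simpl fold_right.
    unfold TM_factor. simpl kap0. rewrite rl0. simpl (0 * _)%nat. simpl Cpow.
    replace (S k' - 1)%nat with k' by lia.
    rewrite (map_ext_in (fun s => Cmult (root_letter L (kap0 kappa s N)) (Cpow z (s * S k' ^ N)))
       (fun s => Cmult (root_letter L (kappa s N)) (Cpow z (s * S k' ^ N)))).
    ring.
    intros s Hs. apply in_seq in Hs. destruct s; [lia|]. reflexivity.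
Qed.

Fixpoint psum (f : nat -> C) (n : nat) : C :=
  match n with O => 0 | S n' => Cplus (psum f n') (f n') end.

Lemma psum_shift f n : psum f (S n) = Cplus (f 0%nat) (psum (fun i => f (S i)) n).
Proof. induction n. simpl. ring. change (psum f (S (S n))) with (Cplus (psum f (S n)) (f (S n))).
  rewrite IHn. simpl. ring. Qed.

Lemma psum_scal c f n : Cmult c (psum f n) = psum (fun i => Cmult c (f i)) n.
Proof. induction n; simpl. ring. rewrite <- IHn. ring. Qed.

Lemma psum_ext f g n : (forall i, (i < n)%nat -> f i = g i) -> psum f n = psum g n.
Proof. induction n; intros H; simpl. reflexivity. rewrite IHn by (intros; apply H; lia). rewrite H by lia. reflexivity. Qed.

Lemma ev_psum e z l : ev e z l = psum (fun i => Cmult (e (nth i l 0%nat)) (Cpow z i)) (length l).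
Proof.
  induction l. reflexivity. cbn [ev length].
  rewrite psum_shift, IHl, psum_scal. cbn [nth Cpow]. f_equal. ring.
  apply psum_ext. intros i _. ring.
Qed.

Lemma sum_psum (c : nat -> C) n : sum_n c n = psum c (S n).
Proof.
  induction n. rewrite sum_O. simpl. ring.
  rewrite sum_Sn, IHn. reflexivity.
Qed.

Theorem lemma2p3 (L k : nat) (kappa : nat -> nat -> nat)
  (hL : (2 <= L)%nat) (hk : (2 <= k)%nat)
  (hkappa : forall s y : nat, (1 <= s <= k - 1)%nat -> (kappa s y < L)%nat)
  (z : C) (hz : Cmod z < 1) :
  exists G : C,
    is_series (fun n : nat => Cmult (TM_seq L k kappa n) (Cpow z n)) G /\
    filterlim (fun N : nat => TM_partial_prod L k kappa z N) eventually (locally G).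
Proof.
  set (c := fun n : nat => Cmult (TM_seq L k kappa n) (Cpow z n)).
  assert (HL : (0 < L)%nat) by lia. assert (Hk : (1 <= k)%nat) by lia.
  assert (Hex : ex_series c).
  { apply (ex_series_le c (fun n => Cmod z ^ n)).
    - intros n. change (norm (c n)) with (Cmod (c n)). unfold c, TM_seq.
      rewrite Cmod_mult, rl_mod, Cmod_pow. lra.
    - apply ex_series_geom. rewrite Rabs_pos_eq; [exact hz|apply Cmod_ge_0]. }
  destruct Hex as [G HG]. exists G. split. exact HG.
  assert (Heq : forall N, TM_partial_prod L k kappa z N = sum_n c (Nat.pred (k ^ N))).
  { intros N. rewrite sum_psum, prod_ev by assumption.
    assert (Hp : (0 < k ^ N)%nat) by (apply Nat.neq_0_lt_0, Nat.pow_nonzero; lia).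
    replace (S (Nat.pred (k ^ N))) with (k ^ N)%nat by lia.
    rewrite ev_psum, TM_len. apply psum_ext. intros i Hi. unfold c, TM_seq. f_equal. f_equal.
    destruct (Nat.le_gt_cases N (S i)) as [H1|H1].
    - symmetry. apply TM_nth_stable; assumption.
    - apply TM_nth_stable; try assumption. lia. pose proof (Nat.pow_gt_lin_r k (S i) ltac:(lia)). lia. }
  eapply filterlim_ext. intros N. symmetry. apply Heq.
  apply (filterlim_comp _ _ _ (fun N => Nat.pred (k ^ N)) (sum_n c) eventually eventually).
  - intros P [M HM]. exists (S M). intros n Hn. apply HM.
    pose proof (Nat.pow_gt_lin_r k n ltac:(lia)). lia.
  - exact HG.
Qed.
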